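(* For each $\Sigma$-tree $X$ there is a pruned tree which is a retract of $X$, and it is unique up to isomorphism: any two pruned retracts of $X$ are isomorphic.
   Context: Let $\Sigma$ be a set. A $\Sigma$-tree is a finite directed graph whose underlying undirected graph is a tree, edges labelled by elements of $\Sigma$, with distinguished start and end vertices such that there is a (possibly empty) directed path from the start vertex to the end vertex. A morphism $X\to Y$ of $\Sigma$-trees maps vertices to vertices and edges to edges, preserving the initial vertex, terminal vertex and label of each edge, and maps the start and end vertices of $X$ to those of $Y$; an isomorphism is a morphism bijective on vertices and edges. A retraction of $X$ is an idempotent morphism $X\to X$; its image (a subtree with the same start and end vertices) is a retract of $X$. $X$ is pruned if it admits no non-identity retraction. *)

(* Defs.v *)
From mathcomp Require Import all_boot.
Set Implicit Arguments. Unset Strict Implicit. Unset Printing Implicit Defensive.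

(* A finite directed multigraph with Sigma-labelled edges and distinguished
   start (sv) and end (ev) vertices. *)
Record sgraph (Sigma : Type) := SGraph {
  V : finType;
  E : finType;
  src : E -> V;
  tgt : E -> V;
  lab : E -> Sigma;
  sv : V;
  ev : V }.
Arguments V {Sigma}. Arguments E {Sigma}.
Arguments src {Sigma}. Arguments tgt {Sigma}. Arguments lab {Sigma}.
Arguments sv {Sigma}. Arguments ev {Sigma}.

Section Graphs.
Variable Sigma : Type.
Implicit Types X Y : sgraph Sigma.

(* undirected walk from u to v: each step is an edge and a direction
   (true = traversed from src to tgt, false = from tgt to src) *)
Fixpoint uwalk X (u v : V X) (w : seq (E X * bool)) : bool :=
  match w with
  | [::] => u == v
  | (e, b) :: w' =>
      if b then (src X e == u) && uwalk (tgt X e) v w'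
      else (tgt X e == u) && uwalk (src X e) v w'
  end.

Fixpoint dwalk X (u v : V X) (p : seq (E X)) : bool :=
  match p with
  | [::] => u == v
  | e :: p' => (src X e == u) && dwalk (tgt X e) v p'
  end.

Definition uconnected X : Prop := forall u v : V X, exists w, uwalk u v w.

(* the underlying undirected multigraph has no cycle: no nonempty closed
   walk using pairwise distinct edges (covers loops and parallel edges) *)
Definition uacyclic X : Prop :=
  ~ exists (u : V X) (w : seq (E X * bool)),
      [/\ w != [::], uniq (map fst w) & uwalk u u w].

Definition is_tree X : Prop :=
  [/\ uconnected X, uacyclic X & exists p, dwalk (sv X) (ev X) p].

Record hom X Y := Hom {
  hV : V X -> V Y;
  hE : E X -> E Y;
  hom_src : forall e, src Y (hE e) = hV (src X e);
  hom_tgt : forall e, tgt Y (hE e) = hV (tgt X e);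
  hom_lab : forall e, lab Y (hE e) = lab X e;
  hom_sv : hV (sv X) = sv Y;
  hom_ev : hV (ev X) = ev Y }.

Definition is_iso X Y (f : hom X Y) : Prop := bijective (hV f) /\ bijective (hE f).

Definition isomorphic X Y : Prop := exists f : hom X Y, is_iso f.

Definition is_retraction X (f : hom X X) : Prop :=
  (forall v, hV f (hV f v) = hV f v) /\ (forall e, hE f (hE f e) = hE f e).

Definition pruned X : Prop :=
  forall f : hom X X, is_retraction f ->
    (forall v, hV f v = v) /\ (forall e, hE f e = e).

Section Image.
Variables (X : sgraph Sigma) (f : hom X X).

Definition imV := {v : V X | v \in codom (hV f)}.
Definition imE := {e : E X | e \in codom (hE f)}.

Lemma im_src_in (e : imE) : src X (val e) \in codom (hV f).
Proof.
case: e => e /= /codomP [e' ->]; rewrite hom_src; exact: codom_f.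
Qed.

Lemma im_tgt_in (e : imE) : tgt X (val e) \in codom (hV f).
Proof.
case: e => e /= /codomP [e' ->]; rewrite hom_tgt; exact: codom_f.
Qed.

Lemma im_sv_in : sv X \in codom (hV f).
Proof. rewrite -(hom_sv f); exact: codom_f. Qed.

Lemma im_ev_in : ev X \in codom (hV f).
Proof. rewrite -(hom_ev f); exact: codom_f. Qed.

Definition image_graph : sgraph Sigma :=
  @SGraph Sigma imV imE
    (fun e => exist _ (src X (val e)) (im_src_in e))
    (fun e => exist _ (tgt X (val e)) (im_tgt_in e))
    (fun e => lab X (val e))
    (exist _ (sv X) im_sv_in)
    (exist _ (ev X) im_ev_in).
End Image.

End Graphs.

(* Main.v *)
Require Import Defs.
From mathcomp Require Import all_boot.
From mathcomp Require Import zify.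
From Stdlib Require Import Classical.
Set Implicit Arguments. Unset Strict Implicit. Unset Printing Implicit Defensive.

Section S.
Variable Sigma : Type.
Implicit Types X Y Z : sgraph Sigma.

Definition hcomp X Y Z (g : hom X Y) (h : hom Y Z) : hom X Z.
Proof.
refine (@Hom _ X Z (fun x => hV h (hV g x)) (fun e => hE h (hE g e)) _ _ _ _ _).
- by move=> e; rewrite !hom_src.
- by move=> e; rewrite !hom_tgt.
- by move=> e; rewrite !hom_lab.
- by rewrite !hom_sv.
- by rewrite !hom_ev.
Defined.

Definition hid X : hom X X := @Hom _ X X id id (fun _ => erefl) (fun _ => erefl)
  (fun _ => erefl) erefl erefl.

Fixpoint hpow X (f : hom X X) n : hom X X :=
  if n is n'.+1 then hcomp (hpow f n') f else hid X.

Lemma hpowV X (f : hom X X) n x : hV (hpow f n) x = iter n (hV f) x.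
Proof. by elim: n => //= n ->. Qed.
Lemma hpowE X (f : hom X X) n x : hE (hpow f n) x = iter n (hE f) x.
Proof. by elim: n => //= n ->. Qed.

Lemma iter_period (T : Type) (g : T -> T) i j : i < j ->
  (forall x, iter j g x = iter i g x) ->
  forall q m x, iter (q * (j - i) + (m + i)) g x = iter (m + i) g x.
Proof.
move=> lij Hj; elim=> [|q IH] m x; first by rewrite mul0n add0n.
have -> : q.+1 * (j - i) + (m + i) = (q * (j - i) + m) + j by rewrite mulSn; lia.
by rewrite iterD Hj -iterD -addnA IH.
Qed.

Lemma iter_idem (T : Type) (g : T -> T) i j : i < j ->
  (forall x, iter j g x = iter i g x) ->
  forall x, iter (i.+1 * (j - i)) g (iter (i.+1 * (j - i)) g x) = iter (i.+1 * (j - i)) g x.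
Proof.
move=> lij Hj x; rewrite -iterD.
set k := i.+1 * (j - i).
have kge : i <= k by rewrite /k; nia.
have -> : k + k = i.+1 * (j - i) + ((k - i) + i) by rewrite -/k; lia.
rewrite iter_period //; congr iter; lia.
Qed.

Lemma idem_pow X (f : hom X X) : exists k, 0 < k /\ is_retraction (hpow f k).
Proof.
pose T := ({ffun V X -> V X} * {ffun E X -> E X})%type.
pose G (n : 'I_(#|{: T}|.+1)) : T := ([ffun x => iter n (hV f) x], [ffun e => iter n (hE f) e]).
have : ~~ injectiveb G.
  by apply/negP => /injectiveP /leq_card; rewrite card_ord ltnn.
case/injectivePn => a [b] ab Gab.
have key : forall i j : 'I_(#|{: T}|.+1), i < j -> G i = G j ->
    exists k, 0 < k /\ is_retraction (hpow f k).
  move=> i j lij [/ffunP HV /ffunP HE]; exists (i.+1 * (j - i)); split.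
    by rewrite muln_gt0 /= subn_gt0.
  split=> x; rewrite ?hpowV ?hpowE; apply: (iter_idem (g:=_) lij) => y.
    by have := HV y; rewrite !ffunE.
  by have := HE y; rewrite !ffunE.
case: (ltngtP a b) => [lab|lba|eab]; first exact: key lab Gab.
  exact: key lba (esym Gab).
by move: ab; rewrite (val_inj eab) eqxx.
Qed.

Lemma pruned_inj X (f : hom X X) : pruned X -> injective (hV f) /\ injective (hE f).
Proof.
move=> Hp; have [[|k] [// _ Hr]] := idem_pow f.
have [H1 H2] := Hp _ Hr.
split=> x y Hxy.
  by rewrite -(H1 x) -(H1 y) !hpowV !iterSr Hxy.
by rewrite -(H2 x) -(H2 y) !hpowE !iterSr Hxy.
Qed.

Lemma bij_of (A B : Type) (g : A -> B) (h : B -> A) :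
  injective (fun x => h (g x)) -> bijective (fun y => g (h y)) -> bijective g.
Proof.
move=> Hinj [pinv K1 K2]; exists (fun y => h (pinv y)); last by move=> y; exact: K2.
move=> x; apply: Hinj => /=; congr h; exact: K2.
Qed.

Definition cores X (r : hom X X) : hom X (image_graph r).
Proof.
refine (@Hom _ X (image_graph r) (fun x => exist _ (hV r x) (codom_f (hV r) x))
  (fun e => exist _ (hE r e) (codom_f (hE r) e)) _ _ _ _ _).
- by move=> e; apply: val_inj => /=; rewrite hom_src.
- by move=> e; apply: val_inj => /=; rewrite hom_tgt.
- by move=> e /=; rewrite hom_lab.
- by apply: val_inj => /=; rewrite hom_sv.
- by apply: val_inj => /=; rewrite hom_ev.
Defined.

Definition incl X (r : hom X X) : hom (image_graph r) X.
Proof.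
refine (@Hom _ (image_graph r) X val val _ _ _ _ _) => //.
Defined.

Lemma cores_val X (r : hom X X) : is_retraction r ->
  forall z : imV r, hV (cores r) (val z) = z.
Proof.
move=> [Hr _] [v Hv]; apply: val_inj => /=.
by case/codomP: Hv => x ->; rewrite Hr.
Qed.

Lemma cores_valE X (r : hom X X) : is_retraction r ->
  forall z : imE r, hE (cores r) (val z) = z.
Proof.
move=> [_ Hr] [v Hv]; apply: val_inj => /=.
by case/codomP: Hv => x ->; rewrite Hr.
Qed.

Lemma part2 X (r1 r2 : hom X X) :
  pruned (image_graph r1) -> pruned (image_graph r2) ->
  isomorphic (image_graph r1) (image_graph r2).
Proof.
move=> P1 P2.
pose g := hcomp (incl r1) (cores r2).
pose h := hcomp (incl r2) (cores r1).
exists g.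
have [I1 I2] := pruned_inj (hcomp g h) P1.
have [J1 J2] := pruned_inj (hcomp h g) P2.
split; apply: (bij_of (h := hV h)) || apply: (bij_of (h := hE h)).
- exact: I1.
- exact: injF_bij J1.
- exact: I2.
- exact: injF_bij J2.
Qed.

Lemma uwalk_map X Y (f : hom X Y) u v w : uwalk u v w ->
  uwalk (hV f u) (hV f v) (map (fun p => (hE f p.1, p.2)) w).
Proof.
elim: w u => [|[e b] w IH] u /=; first by move/eqP->.
by case: b => /andP[/eqP <- H]; rewrite ?hom_src ?hom_tgt eqxx /=; apply: IH.
Qed.

Lemma dwalk_map X Y (f : hom X Y) u v p : dwalk u v p ->
  dwalk (hV f u) (hV f v) (map (hE f) p).
Proof.
elim: p u => [|e p IH] u /=; first by move/eqP->.
by move=> /andP[/eqP <- H]; rewrite hom_src hom_tgt eqxx /=; apply: IH.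
Qed.

Lemma image_tree X (r : hom X X) : is_tree X -> is_retraction r ->
  is_tree (image_graph r).
Proof.
move=> [Hc Ha [p Hp]] Hr; split.
- move=> u v; have [w Hw] := Hc (val u) (val v).
  exists (map (fun p => (hE (cores r) p.1, p.2)) w).
  by rewrite -(cores_val Hr u) -(cores_val Hr v); apply: uwalk_map.
- move=> [u [w [Hne Hu Hw]]]; apply: Ha.
  exists (val u), (map (fun p => (hE (incl r) p.1, p.2)) w); split.
  + by case: (w) Hne.
  + have -> : map fst (map (fun p => (hE (incl r) p.1, p.2)) w) = map val (map fst w).
      by rewrite -!map_comp.
    by rewrite (map_inj_uniq val_inj).
  + exact: (uwalk_map (incl r) Hw).
- exists (map (hE (cores r)) p).
  have := dwalk_map (cores r) Hp; rewrite hom_sv hom_ev; exact.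
Qed.

Definition sz X (r : hom X X) :=
  #|[set v | v \in codom (hV r)]| + #|[set e | e \in codom (hE r)]|.

Lemma step X (r : hom X X) : is_retraction r ->
  pruned (image_graph r) \/ exists s : hom X X, is_retraction s /\ sz s < sz r.
Proof.
move=> Hr; case: (classic (pruned (image_graph r))) => [|Hnp]; first by left.
right; have [g Hg] := not_all_ex_not _ _ Hnp.
have [Rg Hni] := imply_to_and _ _ Hg.
pose s := hcomp (cores r) (hcomp g (incl r)).
have Es : forall x, hV s x = val (hV g (hV (cores r) x)) by [].
have EsE : forall x, hE s x = val (hE g (hE (cores r) x)) by [].
exists s; split.
  split=> x.
    by rewrite Es Es cores_val // (proj1 Rg).
  by rewrite EsE EsE cores_valE // (proj2 Rg).
have subV : [set v | v \in codom (hV s)] \subset [set v | v \in codom (hV r)].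
  apply/subsetP => v; rewrite !inE => /codomP [x ->]; rewrite Es; exact: valP.
have subE : [set v | v \in codom (hE s)] \subset [set v | v \in codom (hE r)].
  apply/subsetP => v; rewrite !inE => /codomP [x ->]; rewrite EsE; exact: valP.
rewrite /sz; case: (not_and_or _ _ Hni) => /not_all_ex_not [z Hz].
- have : [set v | v \in codom (hV s)] \proper [set v | v \in codom (hV r)].
    apply/properP; split => //; exists (val z); first by rewrite inE; apply: valP.
    rewrite inE; apply/negP => /codomP [x Hx]; apply: Hz.
    have Hzx : z = hV g (hV (cores r) x) by apply: val_inj; rewrite Hx Es.
    by rewrite Hzx (proj1 Rg).
  move/proper_card; have := subset_leq_card subE; lia.
- have : [set v | v \in codom (hE s)] \proper [set v | v \in codom (hE r)].
    apply/properP; split => //; exists (val z); first by rewrite inE; apply: valP.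
    rewrite inE; apply/negP => /codomP [x Hx]; apply: Hz.
    have Hzx : z = hE g (hE (cores r) x) by apply: val_inj; rewrite Hx EsE.
    by rewrite Hzx (proj2 Rg).
  move/proper_card; have := subset_leq_card subV; lia.
Qed.

Lemma exists_pruned X : forall n (r : hom X X), is_retraction r -> sz r <= n ->
  exists r' : hom X X, is_retraction r' /\ pruned (image_graph r').
Proof.
elim=> [|n IH] r Hr Hn; case: (step Hr) => [P|[s [Hs lt]]]; try by exists r.
- lia.
- apply: (IH s Hs); lia.
Qed.

End S.

Unset Implicit Arguments.
Theorem proposition3p5 (Sigma : Type) (X : sgraph Sigma) :
  is_tree X ->
  (exists r : hom X X,
      [/\ is_retraction r, is_tree (image_graph r) & pruned (image_graph r)])
  /\
  (forall r1 r2 : hom X X,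
      is_retraction r1 -> pruned (image_graph r1) ->
      is_retraction r2 -> pruned (image_graph r2) ->
      isomorphic (image_graph r1) (image_graph r2)).
Proof.
move=> Ht; split.
  have Hid : is_retraction (hid X) by [].
  have [r [Hr Hp]] := exists_pruned Hid (leqnn (sz (hid X))).
  by exists r; split => //; apply: image_tree.
by move=> r1 r2 _ P1 _ P2; apply: part2.
Qed.
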